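(* Let $d_1,\dots,d_n$ be positive integers with $d=\sum_id_i\ge2$, and let $c_0,c_1\in\mathbb{R}^n$ (in the paper $c_0=(\ln a_1,\dots,\ln a_n)$, $c_1=(\ln b_1,\dots,\ln b_n)$ for positive $a_i,b_i$). There exists a bounded convex open set $\Omega\subset\mathbb{R}\times C^1([0,1];\mathbb{R}^n)$ containing every pair $(\lambda,y)$ that, for some $p_3\in[0,1]$, satisfies $$\sum_{i=1}^nd_i\Big(-y_i'\sum_{k=1}^nd_ky_k'+y_i'^2\Big)\Big|_{r=0}=(d-1)\lambda,$$ $$-y_i'\sum_{k=1}^nd_ky_k'-y_i''=\lambda\ \text{ on }[0,1]\ (i=1,\dots,n),\qquad y(0)=p_3c_0,\quad y(1)=p_3c_1.$$
   Context: $\mathbb{R}\times C^1([0,1];\mathbb{R}^n)$ is the Banach space with the product norm (absolute value on $\mathbb{R}$, $C^1$ norm on the second factor); solutions $y$ are $C^2$. *)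

(* Defs.v *)
From Stdlib Require Import Reals.
Open Scope R_scope.

Fixpoint rsum (n : nat) (f : nat -> R) : R :=
  match n with O => 0 | S m => rsum m f + f m end.

Definition in01 (x : R) : Prop := 0 <= x <= 1.

Definition cont01 (f : R -> R) : Prop :=
  forall x, in01 x -> forall eps, eps > 0 -> exists delta, delta > 0 /\
    forall z, in01 z -> Rabs (z - x) < delta -> Rabs (f z - f x) < eps.

Definition deriv01 (f f' : R -> R) : Prop :=
  forall x, in01 x -> forall eps, eps > 0 -> exists delta, delta > 0 /\
    forall h, h <> 0 -> Rabs h < delta -> in01 (x + h) ->
      Rabs ((f (x + h) - f x) / h - f' x) < eps.

(* An element of R x C^1([0,1];R^n) is represented by (lam, y, y') where
   y i (i < n) are the components, y' i their derivatives on [0,1]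
   (uniquely determined on [0,1]); only values on [0,1] and indices i < n matter. *)
Definition inC1 (n : nat) (y y' : nat -> R -> R) : Prop :=
  forall i, (i < n)%nat -> deriv01 (y i) (y' i) /\ cont01 (y' i).

Definition subset_space (n : nat) (Om : R -> (nat -> R -> R) -> (nat -> R -> R) -> Prop) :=
  forall lam y y', Om lam y y' -> inC1 n y y'.

(* Open w.r.t. |lam| + max_i (sup|y_i| + sup|y_i'|) (an equivalent product norm);
   pointwise strict bounds on the compact [0,1] = sup-norm ball by continuity. *)
Definition open_space (n : nat) (Om : R -> (nat -> R -> R) -> (nat -> R -> R) -> Prop) :=
  forall lam y y', Om lam y y' -> exists eps, eps > 0 /\
    forall mu z z', inC1 n z z' -> Rabs (mu - lam) < eps ->
      (forall i x, (i < n)%nat -> in01 x ->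
         Rabs (z i x - y i x) < eps /\ Rabs (z' i x - y' i x) < eps) ->
      Om mu z z'.

Definition bounded_space (n : nat) (Om : R -> (nat -> R -> R) -> (nat -> R -> R) -> Prop) :=
  exists M, forall lam y y', Om lam y y' -> Rabs lam <= M /\
    forall i x, (i < n)%nat -> in01 x -> Rabs (y i x) <= M /\ Rabs (y' i x) <= M.

Definition convex_space (Om : R -> (nat -> R -> R) -> (nat -> R -> R) -> Prop) :=
  forall l1 y1 y1' l2 y2 y2' t, Om l1 y1 y1' -> Om l2 y2 y2' -> 0 <= t <= 1 ->
    Om (t * l1 + (1 - t) * l2)
       (fun i x => t * y1 i x + (1 - t) * y2 i x)
       (fun i x => t * y1' i x + (1 - t) * y2' i x).

(* Main.v *)
Require Import Defs.
From Coquelicot Require Import Coquelicot.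
From Stdlib Require Import Reals Lra Lia.
Open Scope R_scope.

Lemma rsum_ext n f g : (forall k, (k < n)%nat -> f k = g k) -> rsum n f = rsum n g.
Proof. induction n; simpl; intros H; auto. rewrite IHn; [|intros; apply H; lia]. rewrite H; auto. Qed.

Lemma rsum_lin n (c f g : nat -> R) a :
  rsum n (fun k => c k * (a * f k + g k)) = a * rsum n (fun k => c k * f k) + rsum n (fun k => c k * g k).
Proof. induction n; simpl; [ring|]. rewrite IHn; ring. Qed.

Lemma rsum_const n (c : nat -> R) b : rsum n (fun k => c k * b) = b * rsum n c.
Proof. induction n; simpl; [ring|]. rewrite IHn; ring. Qed.

Lemma rsum_scal n (f : nat -> R) a : rsum n (fun k => a * f k) = a * rsum n f.
Proof. induction n; simpl; [ring|]. rewrite IHn; ring. Qed.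

Lemma rsum_plus n (f g : nat -> R) : rsum n (fun k => f k + g k) = rsum n f + rsum n g.
Proof. induction n; simpl; [ring|]. rewrite IHn; ring. Qed.

Lemma rsum_le n f g : (forall k, (k < n)%nat -> f k <= g k) -> rsum n f <= rsum n g.
Proof. induction n; simpl; intros H; [lra|]. assert (H1 := H n (Nat.lt_succ_diag_r n)).
 assert (rsum n f <= rsum n g) by (apply IHn; intros; apply H; lia). lra. Qed.

Lemma rsum_nonneg n f : (forall k, (k < n)%nat -> 0 <= f k) -> 0 <= rsum n f.
Proof. intros H. replace 0 with (rsum n (fun _ => 0)). apply rsum_le; auto.
 induction n; simpl; auto. rewrite IHn; [ring|intros; apply H; lia]. Qed.

Lemma rsum_term n f i : (forall k, (k < n)%nat -> 0 <= f k) -> (i < n)%nat -> f i <= rsum n f.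
Proof. induction n; simpl; intros H Hi; [lia|].
 assert (0 <= f n) by (apply H; lia).
 assert (0 <= rsum n f) by (apply rsum_nonneg; intros; apply H; lia).
 destruct (Nat.eq_dec i n). subst; lra.
 assert (f i <= rsum n f) by (apply IHn; [intros; apply H; lia | lia]). lra. Qed.

Lemma rsum_abs n f : Rabs (rsum n f) <= rsum n (fun k => Rabs (f k)).
Proof. induction n; simpl. rewrite Rabs_R0; lra.
 eapply Rle_trans. apply Rabs_triang. lra. Qed.

Lemma sq_le_aux s t : 0 <= t -> s * s <= t * t -> s <= t.
Proof. intros. destruct (Rle_dec s t); auto. nra. Qed.

Lemma rsum_CS n (c f g : nat -> R) : (forall k, (k < n)%nat -> 0 <= c k) ->
  rsum n (fun k => c k * f k * g k) * rsum n (fun k => c k * f k * g k)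
  <= rsum n (fun k => c k * (f k * f k)) * rsum n (fun k => c k * (g k * g k)).
Proof. induction n; simpl; intros H; [lra|].
 assert (IH : rsum n (fun k => c k * f k * g k) * rsum n (fun k => c k * f k * g k)
  <= rsum n (fun k => c k * (f k * f k)) * rsum n (fun k => c k * (g k * g k))) by (apply IHn; intros; apply H; lia).
 set (a := rsum n (fun k => c k * f k * g k)) in *.
 set (p := rsum n (fun k => c k * (f k * f k))) in *.
 set (q := rsum n (fun k => c k * (g k * g k))) in *.
 assert (Hp : 0 <= p) by (apply rsum_nonneg; intros; assert (0 <= c k) by (apply H; lia); nra).
 assert (Hq : 0 <= q) by (apply rsum_nonneg; intros; assert (0 <= c k) by (apply H; lia); nra).
 assert (Hc : 0 <= c n) by (apply H; lia).
 set (x := f n) in *. set (y := g n) in *.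
 assert (2 * a * x * y <= p * (y*y) + q * (x*x)).
 { apply sq_le_aux. nra.
   assert (0 <= x*x*y*y) by nra.
   assert ((p*(y*y) + q*(x*x)) * (p*(y*y) + q*(x*x)) - (2*a*x*y)*(2*a*x*y)
     = (p*(y*y) - q*(x*x))*(p*(y*y) - q*(x*x)) + 4*(x*x*y*y)*(p*q - a*a)) by ring.
   assert (0 <= 4*(x*x*y*y)*(p*q - a*a)) by (apply Rmult_le_pos; nra).
   assert (0 <= (p*(y*y) - q*(x*x))*(p*(y*y) - q*(x*x))) by apply Rle_0_sqr.
   lra. }
 assert (c n * (2 * a * x * y) <= c n * (p * (y*y) + q * (x*x))) by (apply Rmult_le_compat_l; auto).
 assert (E1 : (a + c n * x * y) * (a + c n * x * y) = a * a + c n * (2 * a * x * y) + c n * c n * (x*x*y*y)) by ring.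
 assert (E2 : (p + c n * (x * x)) * (q + c n * (y * y)) = p * q + c n * (p * (y*y) + q * (x*x)) + c n * c n * (x*x*y*y)) by ring.
 rewrite E1, E2. lra. Qed.

Definition clamp (x : R) : R := Rmax 0 (Rmin 1 x).

Lemma clamp_id x : in01 x -> clamp x = x.
Proof. unfold in01, clamp, Rmax, Rmin; intros; repeat destruct Rle_dec; lra. Qed.

Lemma clamp_in x : in01 (clamp x).
Proof. unfold in01, clamp, Rmax, Rmin; repeat destruct Rle_dec; lra. Qed.

Lemma clamp_lip a b : Rabs (clamp a - clamp b) <= Rabs (a - b).
Proof. unfold clamp, Rmax, Rmin; repeat destruct Rle_dec; split_Rabs; lra. Qed.

Lemma deriv01_cont f g : deriv01 f g -> cont01 f.
Proof. intros H x Hx eps He.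
 destruct (H x Hx 1 Rlt_0_1) as [d1 [Hd1 Hq]].
 exists (Rmin d1 (eps / (Rabs (g x) + 1))). split.
 { apply Rmin_pos; auto. apply Rdiv_lt_0_compat; auto. pose proof (Rabs_pos (g x)); lra. }
 intros z Hz Hzx. destruct (Req_dec z x) as [->|Hne].
 { unfold Rminus; rewrite Rplus_opp_r, Rabs_R0; auto. }
 assert (Hh : z - x <> 0) by lra.
 assert (Hlt1 : Rabs (z - x) < d1) by (eapply Rlt_le_trans; [apply Hzx| apply Rmin_l]).
 assert (Hlt2 : Rabs (z - x) < eps / (Rabs (g x) + 1)) by (eapply Rlt_le_trans; [apply Hzx| apply Rmin_r]).
 specialize (Hq (z - x) Hh Hlt1). replace (x + (z - x)) with z in Hq by ring. specialize (Hq Hz).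
 set (q := (f z - f x) / (z - x)) in *.
 assert (Hfz : f z - f x = q * (z - x)) by (unfold q; field; auto).
 rewrite Hfz, Rabs_mult.
 assert (Rabs q < Rabs (g x) + 1).
 { replace q with ((q - g x) + g x) by ring. eapply Rle_lt_trans. apply Rabs_triang. lra. }
 assert (0 < Rabs (g x) + 1) by (pose proof (Rabs_pos (g x)); lra).
 apply Rlt_le_trans with ((Rabs (g x) + 1) * (eps / (Rabs (g x) + 1))).
 2: { right; field; lra. }
 pose proof (Rabs_pos q). pose proof (Rabs_pos (z - x)).
 apply Rle_lt_trans with ((Rabs (g x) + 1) * Rabs (z - x)). apply Rmult_le_compat_r; lra.
 apply Rmult_lt_compat_l; auto. Qed.

Lemma cont_ext f x : cont01 f -> continuous (fun t => f (clamp t)) x.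
Proof. intros H. apply continuity_pt_filterlim.
 unfold continuity_pt, continue_in, limit1_in, limit_in; simpl; unfold R_dist.
 intros eps He. destruct (H (clamp x) (clamp_in x) eps He) as [d [Hd Hz]].
 exists d; split; auto. intros z [_ Hzx]. apply Hz. apply clamp_in.
 eapply Rle_lt_trans. apply clamp_lip. auto. Qed.

Lemma deriv_ext f g x : deriv01 f g -> 0 < x < 1 -> is_derive (fun t => f (clamp t)) x (g x).
Proof. intros H Hx. apply is_derive_Reals. intros eps He.
 assert (Hx01 : in01 x) by (unfold in01; lra).
 destruct (H x Hx01 eps He) as [d [Hd Hq]].
 assert (Hm : 0 < Rmin d (Rmin x (1 - x))) by (repeat apply Rmin_pos; lra).
 exists (mkposreal _ Hm). simpl. intros h Hh Hlt.
 assert (Hd' : Rabs h < d) by (eapply Rlt_le_trans; [apply Hlt| apply Rmin_l]).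
 assert (Hd2 : Rabs h < Rmin x (1 - x)) by (eapply Rlt_le_trans; [apply Hlt| apply Rmin_r]).
 assert (Hin : in01 (x + h)).
 { unfold in01. assert (Rmin x (1-x) <= x) by apply Rmin_l. assert (Rmin x (1-x) <= 1-x) by apply Rmin_r.
   revert Hd2; split_Rabs; lra. }
 rewrite (clamp_id _ Hin), (clamp_id _ Hx01). apply Hq; auto. Qed.

Lemma mvt01 F F' a b : 0 <= a -> a < b -> b <= 1 ->
  (forall x, in01 x -> continuous F x) ->
  (forall x, 0 < x < 1 -> is_derive F x (F' x)) ->
  exists c, a <= c <= b /\ F b - F a = F' c * (b - a).
Proof. intros Ha Hab Hb Hc Hd.
 destruct (MVT_gen F a b F') as [c [Hc1 Hc2]].
 - intros x Hx. rewrite Rmin_left, Rmax_right in Hx by lra. apply Hd; lra.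
 - intros x Hx. rewrite Rmin_left, Rmax_right in Hx by lra. apply continuity_pt_filterlim. apply Hc. unfold in01; lra.
 - rewrite Rmin_left, Rmax_right in Hc1 by lra. exists c; auto. Qed.

Lemma mono F F' a b : 0 <= a -> a <= b -> b <= 1 ->
  (forall x, in01 x -> continuous F x) ->
  (forall x, 0 < x < 1 -> is_derive F x (F' x)) ->
  (forall x, in01 x -> 0 <= F' x) -> F a <= F b.
Proof. intros Ha Hab Hb Hc Hd Hs. destruct (Req_dec a b) as [->|Hne]; [lra|].
 destruct (mvt01 F F' a b) as [c [Hc1 Hc2]]; auto; try lra.
 assert (0 <= F' c) by (apply Hs; unfold in01; lra). nra. Qed.

Lemma const01 F F' x : in01 x ->
  (forall x, in01 x -> continuous F x) ->
  (forall x, 0 < x < 1 -> is_derive F x (F' x)) ->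
  (forall x, in01 x -> F' x = 0) -> F x = F 0.
Proof. intros Hx Hc Hd Hs. unfold in01 in Hx. destruct (Req_dec x 0) as [->|Hne]; auto.
 destruct (mvt01 F F' 0 x) as [c [Hc1 Hc2]]; auto; try lra.
 rewrite Hs in Hc2 by (unfold in01; lra). lra. Qed.

Lemma deq (f : R -> R) (x l l' : R) : is_derive f x l -> l = l' -> is_derive f x l'.
Proof. intros H ->; auto. Qed.
Lemma dplus (f g : R -> R) (x a b : R) : is_derive f x a -> is_derive g x b -> is_derive (fun t => f t + g t) x (a + b).
Proof. intros; apply (is_derive_plus f g); auto. Qed.
Lemma dminus (f g : R -> R) (x a b : R) : is_derive f x a -> is_derive g x b -> is_derive (fun t => f t - g t) x (a - b).
Proof. intros; apply (is_derive_minus f g); auto. Qed.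
Lemma dmult (f g : R -> R) (x a b : R) : is_derive f x a -> is_derive g x b -> is_derive (fun t => f t * g t) x (a * g x + f x * b).
Proof. intros; apply (is_derive_mult f g); auto. intros; apply Rmult_comm. Qed.
Lemma dconst (c : R) (x : R) : is_derive (fun _ => c) x 0.
Proof. apply (@is_derive_const R_AbsRing R_NormedModule c x). Qed.
Lemma did (x : R) : is_derive (fun t => t) x 1.
Proof. apply (@is_derive_id R_AbsRing x). Qed.
Lemma dexp (f : R -> R) (x a : R) : is_derive f x a -> is_derive (fun t => exp (f t)) x (a * exp (f x)).
Proof. intros H. apply (is_derive_comp exp f); auto. apply is_derive_exp. Qed.
Lemma dsin (f : R -> R) (x a : R) : is_derive f x a -> is_derive (fun t => sin (f t)) x (a * cos (f x)).
Proof. intros H. apply (is_derive_comp sin f); auto. apply is_derive_sin. Qed.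
Lemma dcos (f : R -> R) (x a : R) : is_derive f x a -> is_derive (fun t => cos (f t)) x (a * - sin (f x)).
Proof. intros H. apply (is_derive_comp cos f); auto. apply is_derive_cos. Qed.
Lemma dln (f : R -> R) (x a : R) : 0 < f x -> is_derive f x a -> is_derive (fun t => ln (f t)) x (a * / f x).
Proof. intros Hp H. apply (is_derive_comp ln f); auto. apply is_derive_ln; auto. Qed.

Lemma cplus (f g : R -> R) (x : R) : continuous f x -> continuous g x -> continuous (fun t => f t + g t) x.
Proof. intros; apply (continuous_plus f g); auto. Qed.
Lemma cminus (f g : R -> R) (x : R) : continuous f x -> continuous g x -> continuous (fun t => f t - g t) x.
Proof. intros; apply (continuous_minus f g); auto. Qed.
Lemma cmult (f g : R -> R) (x : R) : continuous f x -> continuous g x -> continuous (fun t => f t * g t) x.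
Proof. intros; apply (continuous_mult f g); auto. Qed.
Lemma cconst (c : R) (x : R) : continuous (fun _ => c) x.
Proof. apply (@continuous_const R_UniformSpace R_UniformSpace c x). Qed.
Lemma cid (x : R) : continuous (fun t : R => t) x.
Proof. apply (@continuous_id R_UniformSpace x). Qed.
Lemma cexp (f : R -> R) (x : R) : continuous f x -> continuous (fun t => exp (f t)) x.
Proof. intros H. apply (@continuous_comp R_UniformSpace R_UniformSpace R_UniformSpace f exp x); auto. apply (@ex_derive_continuous R_AbsRing R_NormedModule). eexists; apply is_derive_exp. Qed.
Lemma csin (f : R -> R) (x : R) : continuous f x -> continuous (fun t => sin (f t)) x.
Proof. intros H. apply (@continuous_comp R_UniformSpace R_UniformSpace R_UniformSpace f sin x); auto. apply (@ex_derive_continuous R_AbsRing R_NormedModule). eexists; apply is_derive_sin. Qed.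
Lemma ccos (f : R -> R) (x : R) : continuous f x -> continuous (fun t => cos (f t)) x.
Proof. intros H. apply (@continuous_comp R_UniformSpace R_UniformSpace R_UniformSpace f cos x); auto. apply (@ex_derive_continuous R_AbsRing R_NormedModule). eexists; apply is_derive_cos. Qed.
Lemma cln (f : R -> R) (x : R) : 0 < f x -> continuous f x -> continuous (fun t => ln (f t)) x.
Proof. intros Hp H. apply (@continuous_comp R_UniformSpace R_UniformSpace R_UniformSpace f ln x); auto. apply (@ex_derive_continuous R_AbsRing R_NormedModule). eexists; apply is_derive_ln; auto. Qed.

Lemma rsum_derive n (f : nat -> R -> R) (f' : nat -> R) x :
  (forall k, (k < n)%nat -> is_derive (f k) x (f' k)) ->
  is_derive (fun t => rsum n (fun k => f k t)) x (rsum n f').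
Proof. induction n; simpl; intros H. apply dconst.
 apply dplus. apply IHn; intros; apply H; lia. apply H; lia. Qed.

Lemma rsum_cont n (f : nat -> R -> R) x :
  (forall k, (k < n)%nat -> continuous (f k) x) ->
  continuous (fun t => rsum n (fun k => f k t)) x.
Proof. induction n; simpl; intros H. apply cconst.
 apply cplus. apply IHn; intros; apply H; lia. apply H; lia. Qed.

Lemma copp (f : R -> R) (x : R) : continuous f x -> continuous (fun t => - f t) x.
Proof. intros; apply (continuous_opp f); auto. Qed.
Lemma dopp (f : R -> R) (x a : R) : is_derive f x a -> is_derive (fun t => - f t) x (- a).
Proof. intros; apply (is_derive_opp f); auto. Qed.

Ltac cstep := lazymatch goal with
 | |- continuous (fun _ => ?c) _ => apply cconst
 | |- continuous (fun t => t) _ => apply cid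
 | |- continuous (fun t => @?a t + @?b t) _ => apply (cplus a b)
 | |- continuous (fun t => @?a t - @?b t) _ => apply (cminus a b)
 | |- continuous (fun t => @?a t * @?b t) _ => apply (cmult a b)
 | |- continuous (fun t => - @?a t) _ => apply (copp a)
 | |- continuous (fun t => exp (@?a t)) _ => apply (cexp a)
 | |- continuous (fun t => sin (@?a t)) _ => apply (csin a)
 | |- continuous (fun t => cos (@?a t)) _ => apply (ccos a)
 | |- continuous (fun t => ln (@?a t)) _ => apply (cln a)
 | |- continuous _ _ => first [eassumption | match goal with H : forall x, continuous _ x |- _ => apply H end]
 end.
Ltac ctac := repeat cstep.
Ltac dstep := lazymatch goal with
 | |- is_derive (fun _ => ?c) _ _ => apply dconst
 | |- is_derive (fun t => t) _ _ => apply did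
 | |- is_derive (fun t => @?a t + @?b t) _ _ => eapply (dplus a b)
 | |- is_derive (fun t => @?a t - @?b t) _ _ => eapply (dminus a b)
 | |- is_derive (fun t => @?a t * @?b t) _ _ => eapply (dmult a b)
 | |- is_derive (fun t => - @?a t) _ _ => eapply (dopp a)
 | |- is_derive (fun t => exp (@?a t)) _ _ => eapply (dexp a)
 | |- is_derive (fun t => sin (@?a t)) _ _ => eapply (dsin a)
 | |- is_derive (fun t => cos (@?a t)) _ _ => eapply (dcos a)
 | |- is_derive (fun t => ln (@?a t)) _ _ => eapply (dln a)
 end.
Ltac dtac := repeat dstep.

Lemma exp_le' x y : x <= y -> exp x <= exp y.
Proof. intros H; destruct H as [H|H]; [left; apply exp_increasing; auto | right; rewrite H; auto]. Qed.

Lemma rsum_minus n (f g : nat -> R) : rsum n f - rsum n g = rsum n (fun k => f k - g k).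
Proof. induction n; cbn [rsum]; [ring|]. rewrite <- IHn; ring. Qed.

Lemma rsum_sq n (c f : nat -> R) s e :
  rsum n (fun k => c k * (((f k - s) * e) * ((f k - s) * e)))
  = e * e * (rsum n (fun k => c k * (f k * f k)) - 2 * s * rsum n (fun k => c k * f k) + s * s * rsum n c).
Proof. induction n; cbn [rsum]; [ring|]. rewrite IHn; ring. Qed.

Lemma rsum_bd n (c f : nat -> R) s :
  rsum n (fun k => c k * (- f k * s + f k ^ 2)) = - s * rsum n (fun k => c k * f k) + rsum n (fun k => c k * (f k * f k)).
Proof. induction n; cbn [rsum]; [ring|]. rewrite IHn; ring. Qed.

Lemma rsum_ode n (c f : nat -> R) s l :
  rsum n (fun k => c k * (- f k * s - l)) = - s * rsum n (fun k => c k * f k) - l * rsum n c.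
Proof. induction n; cbn [rsum]; [ring|]. rewrite IHn; ring. Qed.

Set Bullet Behavior "Strict Subproofs".

Lemma apriori (n : nat) (dd : nat -> nat) (c0 c1 : nat -> R) :
  (forall i, (i < n)%nat -> (0 < dd i)%nat) ->
  (2 <= rsum n (fun i => INR (dd i))) ->
  exists M, forall (lam p3 : R) (y y' y'' : nat -> R -> R),
      0 <= p3 <= 1 ->
      (forall i, (i < n)%nat ->
         deriv01 (y i) (y' i) /\ deriv01 (y' i) (y'' i) /\ cont01 (y'' i)) ->
      rsum n (fun i => INR (dd i) *
          (- y' i 0 * rsum n (fun k => INR (dd k) * y' k 0) + (y' i 0) ^ 2))
        = (rsum n (fun i => INR (dd i)) - 1) * lam ->
      (forall i x, (i < n)%nat -> in01 x ->
         - y' i x * rsum n (fun k => INR (dd k) * y' k x) - y'' i x = lam) ->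
      (forall i, (i < n)%nat -> y i 0 = p3 * c0 i /\ y i 1 = p3 * c1 i) ->
      Rabs lam <= M /\ forall i x, (i < n)%nat -> in01 x -> Rabs (y i x) <= M /\ Rabs (y' i x) <= M.
Proof.
 intros Hdd HD2.
 set (D := rsum n (fun i => INR (dd i))) in *.
 set (K := rsum n (fun k => INR (dd k) * (Rabs (c0 k) + Rabs (c1 k)))).
 set (Zb := rsum n (fun i => INR (dd i) * ((Rabs (c0 i) + Rabs (c1 i) + K) * (Rabs (c0 i) + Rabs (c1 i) + K)))).
 set (Eb := exp (K + 1 + 2 * Zb) * exp (K + 1 + 2 * Zb) + 2 * Zb * exp K * exp K).
 set (Sb2 := 2 * (Eb * exp K * exp K + K * K)).
 set (Mu := K * K + 16).
 set (Ub2 := 2 * (Sb2 + Mu) + 2 * Sb2).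
 assert (Hd1 : forall k, (k < n)%nat -> 1 <= INR (dd k)).
 { intros k Hk. specialize (Hdd k Hk). change 1 with (INR 1). apply le_INR. lia. }
 assert (HK : 0 <= K) by (apply rsum_nonneg; intros k Hk; specialize (Hd1 k Hk);
   pose proof (Rabs_pos (c0 k)); pose proof (Rabs_pos (c1 k)); nra).
 assert (HZb : 0 <= Zb) by (apply rsum_nonneg; intros k Hk; specialize (Hd1 k Hk);
   apply Rmult_le_pos; [lra | apply Rle_0_sqr]).
 assert (HeK : 0 < exp K) by apply exp_pos.
 assert (HEb : 0 <= Eb).
 { unfold Eb. pose proof (exp_pos (K + 1 + 2 * Zb)). assert (0 <= Zb * exp K * exp K) by (repeat apply Rmult_le_pos; lra). nra. }
 assert (HSb2 : 0 <= Sb2) by (unfold Sb2; assert (0 <= Eb * exp K * exp K) by (repeat apply Rmult_le_pos; lra); nra).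
 assert (HUb2 : 0 <= Ub2) by (unfold Ub2, Mu; nra).
 exists (Mu + K + 1 + Ub2).
 intros lam p3 y y' y'' Hp3 Hreg Hbd Hode Hbc.
 set (mu := D * lam).
 assert (HDpos : 0 < D) by lra.
 set (Yt := fun t => rsum n (fun k => INR (dd k) * y k (clamp t))).
 set (St := fun t => rsum n (fun k => INR (dd k) * y' k (clamp t))).
 set (yt := fun i t => y i (clamp t)).
 set (ut := fun i t => y' i (clamp t)).
 assert (Hyc : forall i x, (i < n)%nat -> continuous (yt i) x).
 { intros i x Hi. apply cont_ext. apply (deriv01_cont _ (y' i)). apply Hreg; auto. }
 assert (Huc : forall i x, (i < n)%nat -> continuous (ut i) x).
 { intros i x Hi. apply cont_ext. apply (deriv01_cont _ (y'' i)). apply Hreg; auto. }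
 assert (Hyd : forall i x, (i < n)%nat -> 0 < x < 1 -> is_derive (yt i) x (ut i x)).
 { intros i x Hi Hx. unfold ut. rewrite clamp_id by (unfold in01; lra). apply deriv_ext; auto. apply Hreg; auto. }
 assert (Hud : forall i x, (i < n)%nat -> 0 < x < 1 -> is_derive (ut i) x (- ut i x * St x - lam)).
 { intros i x Hi Hx. unfold ut, St. rewrite clamp_id by (unfold in01; lra).
   rewrite <- (Hode i x Hi) by (unfold in01; lra). eapply deq. apply deriv_ext; auto. apply Hreg; auto. ring. }
 assert (HYc : forall x, continuous Yt x).
 { intros x. unfold Yt. apply (rsum_cont n (fun k t => INR (dd k) * y k (clamp t))). intros k Hk.
   apply cmult. apply cconst. apply (Hyc k x Hk). }
 assert (HSc : forall x, continuous St x).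
 { intros x. unfold St. apply (rsum_cont n (fun k t => INR (dd k) * y' k (clamp t))). intros k Hk.
   apply cmult. apply cconst. apply (Huc k x Hk). }
 assert (HYd : forall x, 0 < x < 1 -> is_derive Yt x (St x)).
 { intros x Hx. unfold Yt. apply (rsum_derive n (fun k t => INR (dd k) * y k (clamp t))). intros k Hk.
   eapply deq. apply dmult. apply dconst. apply (Hyd k x Hk Hx). unfold ut. ring. }
 assert (HSd : forall x, 0 < x < 1 -> is_derive St x (- (St x * St x) - mu)).
 { intros x Hx. unfold St at 1. eapply deq.
   apply (rsum_derive n (fun k t => INR (dd k) * y' k (clamp t)) (fun k => INR (dd k) * (- ut k x * St x - lam))).
   intros k Hk. eapply deq. apply dmult. apply dconst. apply (Hud k x Hk Hx). cbv beta. ring.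
   rewrite rsum_ode. cbv beta. change (rsum n (fun k => INR (dd k) * ut k x)) with (St x). change (rsum n (fun k => INR (dd k))) with D. unfold mu. ring. }
 assert (HYv : forall x, in01 x -> Yt x = rsum n (fun k => INR (dd k) * y k x)).
 { intros x Hx. unfold Yt. rewrite clamp_id; auto. }
 assert (HSv : forall x, in01 x -> St x = rsum n (fun k => INR (dd k) * y' k x)).
 { intros x Hx. unfold St. rewrite clamp_id; auto. }
 assert (Hytv : forall i x, in01 x -> yt i x = y i x).
 { intros i x Hx. unfold yt. rewrite clamp_id; auto. }
 assert (Hutv : forall i x, in01 x -> ut i x = y' i x).
 { intros i x Hx. unfold ut. rewrite clamp_id; auto. }
 clearbody Yt St yt ut.
 assert (H0 : in01 0) by (unfold in01; lra).
 assert (H1 : in01 1) by (unfold in01; lra).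
 assert (HY0 : Yt 0 = rsum n (fun k => INR (dd k) * (p3 * c0 k))).
 { rewrite HYv by auto. apply rsum_ext. intros k Hk. rewrite (proj1 (Hbc k Hk)); auto. }
 assert (HY1 : Yt 1 = rsum n (fun k => INR (dd k) * (p3 * c1 k))).
 { rewrite HYv by auto. apply rsum_ext. intros k Hk. rewrite (proj2 (Hbc k Hk)); auto. }
 assert (Hp3abs : forall z, Rabs (p3 * z) <= Rabs z).
 { intros z. rewrite Rabs_mult. rewrite (Rabs_right p3) by lra. pose proof (Rabs_pos z). nra. }
 assert (HY0K : Rabs (Yt 0) <= K).
 { rewrite HY0. eapply Rle_trans. apply rsum_abs. apply rsum_le. intros k Hk.
   specialize (Hd1 k Hk). rewrite Rabs_mult, (Rabs_right (INR (dd k))) by lra.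
   pose proof (Hp3abs (c0 k)). pose proof (Rabs_pos (c1 k)). nra. }
 assert (HY1K : Rabs (Yt 1) <= K).
 { rewrite HY1. eapply Rle_trans. apply rsum_abs. apply rsum_le. intros k Hk.
   specialize (Hd1 k Hk). rewrite Rabs_mult, (Rabs_right (INR (dd k))) by lra.
   pose proof (Hp3abs (c1 k)). pose proof (Rabs_pos (c0 k)). nra. }
 assert (HY10K : Rabs (Yt 1 - Yt 0) <= K).
 { rewrite HY0, HY1, rsum_minus. eapply Rle_trans. apply rsum_abs. apply rsum_le. intros k Hk.
   specialize (Hd1 k Hk). replace (INR (dd k) * (p3 * c1 k) - INR (dd k) * (p3 * c0 k)) with (INR (dd k) * (p3 * (c1 k - c0 k))) by ring.
   rewrite Rabs_mult, (Rabs_right (INR (dd k))) by lra.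
   pose proof (Hp3abs (c1 k - c0 k)). pose proof (Rabs_triang (c1 k) (- c0 k)). rewrite Rabs_Ropp in H2.
   unfold Rminus in *. nra. }
 set (En := fun t => (St t * St t + mu) * (exp (Yt t) * exp (Yt t))).
 assert (HEn : forall x, in01 x -> En x = En 0).
 { intros x Hx. apply (const01 En (fun _ => 0)); auto.
   - intros t Ht. unfold En. ctac.
   - intros t Ht. unfold En. eapply deq. dtac. apply HSd; auto. apply HSd; auto. apply HYd; auto. apply HYd; auto.
     cbv beta. ring. }
 set (E := En 0).
 set (Vt := fun i t => (ut i t - St t * / D) * exp (Yt t)).
 assert (HV : forall i x, (i < n)%nat -> in01 x -> Vt i x = Vt i 0).
 { intros i x Hi Hx. apply (const01 (Vt i) (fun _ => 0)); auto.
   - intros t Ht. unfold Vt. ctac. all: apply Huc; auto.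
   - intros t Ht. unfold Vt. eapply deq. dtac.
     apply Hud; auto. apply HSd; auto. apply HYd; auto.
     cbv beta. unfold mu. field. lra. }
 set (a := fun i => Vt i 0).
 set (A := rsum n (fun i => INR (dd i) * (a i * a i))).
 assert (HA0 : 0 <= A).
 { apply rsum_nonneg. intros k Hk. specialize (Hd1 k Hk). apply Rmult_le_pos. lra. apply Rle_0_sqr. }
 assert (HAE : A = (D - 1) / D * E).
 { unfold A, a, Vt, E, En. cbv beta.
   pose proof (HSv 0 H0) as HS0. rewrite HS0. rewrite (rsum_ext n _ (fun k => INR (dd k) * (((y' k 0 - rsum n (fun k0 => INR (dd k0) * y' k0 0) * / D) * exp (Yt 0)) * ((y' k 0 - rsum n (fun k0 => INR (dd k0) * y' k0 0) * / D) * exp (Yt 0))))).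
   2: { intros k Hk. rewrite Hutv by auto. auto. }
   rewrite rsum_sq. rewrite rsum_bd in Hbd. fold D in Hbd |- *.
   set (S0 := rsum n (fun k0 => INR (dd k0) * y' k0 0)) in *.
   set (Q := rsum n (fun k => INR (dd k) * (y' k 0 * y' k 0))) in *.
   assert (HQ : Q = (D - 1) * lam + S0 * S0) by lra.
   rewrite HQ. unfold mu. field. lra. }
 assert (HE0 : 0 <= E).
 { assert (0 < (D - 1) / D) by (apply Rdiv_lt_0_compat; lra).
   destruct (Rle_dec 0 E); auto. nra. }
 assert (Hpos : forall x, in01 x -> 0 <= St x * St x + mu).
 { intros x Hx. pose proof (HEn x Hx). fold E in H. unfold En in H.
   pose proof (exp_pos (Yt x)). destruct (Rle_dec 0 (St x * St x + mu)); auto.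
   assert (0 < exp (Yt x) * exp (Yt x)) by nra. nra. }
 assert (HmuK : - (K * K) <= mu).
 { destruct (mvt01 Yt St 0 1) as [c [Hc1 Hc2]]; try lra; auto.
   assert (Hc : in01 c) by (unfold in01; lra). specialize (Hpos c Hc).
   rewrite Rminus_0_r, Rmult_1_r in Hc2. rewrite <- Hc2 in Hpos.
   assert ((Yt 1 - Yt 0) * (Yt 1 - Yt 0) <= K * K).
   { pose proof (Rabs_pos (Yt 1 - Yt 0)).
     replace ((Yt 1 - Yt 0) * (Yt 1 - Yt 0)) with (Rabs (Yt 1 - Yt 0) * Rabs (Yt 1 - Yt 0)).
     nra. rewrite <- Rabs_mult. apply Rabs_right. apply Rle_ge, Rle_0_sqr. }
   lra. }
 assert (HPI : 0 < PI) by apply PI_RGT_0.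
 assert (HmuPI : mu < PI * PI).
 { destruct (Rlt_dec mu (PI*PI)) as [h|h]; auto. exfalso. apply Rnot_lt_le in h.
   set (F := fun t => exp (Yt t) * (PI * cos (PI * t) - St t * sin (PI * t))).
   assert (HF : F 0 <= F 1).
   { apply (mono F (fun t => exp (Yt t) * sin (PI * t) * (mu - PI * PI))); try lra.
     - intros t Ht. unfold F. ctac.
     - intros t Ht. unfold F. eapply deq. dtac. apply HYd; auto. apply HSd; auto. cbv beta. ring.
     - intros t Ht. unfold in01 in Ht. apply Rmult_le_pos; [apply Rmult_le_pos; [left; apply exp_pos| apply sin_ge_0; nra] | lra]. }
   assert (F0 : F 0 = exp (Yt 0) * PI) by (unfold F; rewrite Rmult_0_r, sin_0, cos_0; ring).
   assert (F1 : F 1 = - (exp (Yt 1) * PI)) by (unfold F; rewrite Rmult_1_r, sin_PI, cos_PI; ring).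
   pose proof (exp_pos (Yt 0)). pose proof (exp_pos (Yt 1)).
   assert (0 < exp (Yt 0) * PI) by (apply Rmult_lt_0_compat; lra).
   assert (0 < exp (Yt 1) * PI) by (apply Rmult_lt_0_compat; lra). lra. }
 assert (HmuM : Rabs mu <= Mu).
 { pose proof PI_4. unfold Mu. assert (PI * PI <= 16) by nra. assert (0 <= K * K) by nra. split_Rabs; lra. }
 assert (HlamM : Rabs lam <= Mu).
 { apply Rle_trans with (Rabs mu); auto. unfold mu. rewrite Rabs_mult, (Rabs_right D) by lra.
   pose proof (Rabs_pos lam). nra. }
 assert (Hyb : forall x, in01 x -> - K <= Yt x -> Yt x <= K -> exp (- K) <= exp (Yt x) <= exp K).
 { intros x _ h1 h2. split; apply exp_le'; lra. }
 assert (HY0b : - K <= Yt 0 <= K) by (revert HY0K; split_Rabs; lra).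
 assert (HY1b : - K <= Yt 1 <= K) by (revert HY1K; split_Rabs; lra).
 set (sg := fun t => rsum n (fun i => INR (dd i) * a i * (yt i t - Yt t * / D))).
 set (sg' := fun t => rsum n (fun i => INR (dd i) * a i * (ut i t - St t * / D))).
 assert (Hsgc : forall x, continuous sg x).
 { intros x. unfold sg. apply (rsum_cont n (fun i t => INR (dd i) * a i * (yt i t - Yt t * / D))).
   intros k Hk. ctac. apply Hyc; auto. }
 assert (Hsgd : forall x, 0 < x < 1 -> is_derive sg x (sg' x)).
 { intros x Hx. unfold sg, sg'.
   apply (rsum_derive n (fun i t => INR (dd i) * a i * (yt i t - Yt t * / D)) (fun i => INR (dd i) * a i * (ut i x - St x * / D))).
   intros k Hk. eapply deq. dtac. apply Hyd; auto. apply HYd; auto. cbv beta. ring. }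
 assert (Hvx : forall i x, (i < n)%nat -> in01 x -> ut i x - St x * / D = a i * / exp (Yt x)).
 { intros i x Hi Hx. pose proof (HV i x Hi Hx) as Hvk. unfold Vt at 1 in Hvk. change (Vt i 0) with (a i) in Hvk.
   rewrite <- Hvk. field. split; [apply Rgt_not_eq, exp_pos | lra]. }
 assert (Hsgv : forall x, in01 x -> sg' x = A * / exp (Yt x)).
 { intros x Hx. unfold sg'. rewrite (Rmult_comm A). unfold A. rewrite <- rsum_scal. apply rsum_ext. intros k Hk.
   rewrite Hvx by auto. ring. }
 set (beta := fun i => p3 * (c1 i - c0 i) - (Yt 1 - Yt 0) * / D).
 assert (Hsg10 : sg 1 - sg 0 = rsum n (fun i => INR (dd i) * a i * beta i)).
 { unfold sg. rewrite rsum_minus. apply rsum_ext. intros k Hk. rewrite !Hytv by auto.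
   destruct (Hbc k Hk) as [e0 e1]. rewrite e0, e1. unfold beta. ring. }
 assert (HCS : (sg 1 - sg 0) * (sg 1 - sg 0) <= A * Zb).
 { rewrite Hsg10. eapply Rle_trans. apply (rsum_CS n (fun i => INR (dd i)) a beta).
   intros k Hk; specialize (Hd1 k Hk); lra.
   apply Rmult_le_compat_l; auto. apply rsum_le. intros k Hk. specialize (Hd1 k Hk).
   apply Rmult_le_compat_l; [lra|].
   assert (Hb : Rabs (beta k) <= Rabs (c0 k) + Rabs (c1 k) + K).
   { unfold beta. unfold Rminus at 1. eapply Rle_trans. apply Rabs_triang. rewrite Rabs_Ropp.
     assert (Rabs (p3 * (c1 k - c0 k)) <= Rabs (c0 k) + Rabs (c1 k)).
     { eapply Rle_trans. apply Hp3abs. unfold Rminus. eapply Rle_trans. apply Rabs_triang. rewrite Rabs_Ropp. lra. }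
     assert (Rabs ((Yt 1 - Yt 0) * / D) <= K).
     { rewrite Rabs_mult. rewrite (Rabs_right (/ D)) by (apply Rle_ge; left; apply Rinv_0_lt_compat; lra).
       assert (/ D <= 1) by (rewrite <- Rinv_1; apply Rinv_le_contravar; lra).
       pose proof (Rabs_pos (Yt 1 - Yt 0)). assert (0 < / D) by (apply Rinv_0_lt_compat; lra). nra. }
     lra. }
   pose proof (Rabs_pos (beta k)).
   replace (beta k * beta k) with (Rabs (beta k) * Rabs (beta k)) by (rewrite <- Rabs_mult; apply Rabs_right; apply Rle_ge, Rle_0_sqr).
   nra. }
 assert (HeY : forall x, in01 x -> 0 < exp (Yt x)) by (intros; apply exp_pos).
 assert (HEnx : forall x, in01 x -> (St x * St x + mu) * (exp (Yt x) * exp (Yt x)) = E).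
 { intros x Hx. exact (HEn x Hx). }
 assert (HDA : E / 2 <= A).
 { rewrite HAE. assert (1/2 <= (D - 1) / D). { apply (Rmult_le_reg_r D); [lra|]. field_simplify; lra. } nra. }
 assert (HEb' : E <= Eb).
 { destruct (Req_dec E 0) as [HE|HE]. { rewrite HE; auto. }
   assert (HEp : 0 < E) by lra.
   assert (HAp : 0 < A) by lra.
   destruct (Rle_dec 0 mu) as [Hm|Hm].
   - set (sE := sqrt E).
     assert (HsE : sE * sE = E) by (apply sqrt_sqrt; lra).
     assert (HsE0 : 0 < sE) by (apply sqrt_lt_R0; lra).
     assert (HPd : forall x, in01 x -> St x * exp (Yt x) <= sE).
     { intros x Hx. apply sq_le_aux; [lra|]. rewrite HsE. rewrite <- (HEnx x Hx).
       pose proof (HeY x Hx). assert (0 <= mu * (exp (Yt x) * exp (Yt x))) by (apply Rmult_le_pos; nra).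
       nra. }
     set (P0 := exp (Yt 0)).
     assert (HP0 : 0 < P0) by apply exp_pos.
     assert (HP : forall x, in01 x -> exp (Yt x) <= P0 + sE * x).
     { intros x Hx. assert (HH : (fun t => P0 + sE * t - exp (Yt t)) 0 <= (fun t => P0 + sE * t - exp (Yt t)) x).
       { apply (mono (fun t => P0 + sE * t - exp (Yt t)) (fun t => sE - St t * exp (Yt t))); try (unfold in01 in Hx; lra).
         - intros t Ht. ctac.
         - intros t Ht. eapply deq. dtac. apply HYd; auto. cbv beta. ring.
         - intros t Ht. specialize (HPd t Ht). lra. }
       cbv beta in HH. unfold P0 in *. lra. }
     set (G := fun t => sE * sg t - A * ln (P0 + sE * t)).
     assert (HG : G 0 <= G 1).
     { apply (mono G (fun t => sE * sg' t - A * (sE * / (P0 + sE * t)))); try lra.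
       - intros t Ht. unfold G. ctac. unfold in01 in Ht; nra.
       - intros t Ht. unfold G. eapply deq. dtac. apply Hsgd; auto. nra. cbv beta. ring.
       - intros t Ht. rewrite Hsgv by auto.
         assert (/ (P0 + sE * t) <= / exp (Yt t)) by (apply Rinv_le_contravar; [apply exp_pos | apply HP; auto]).
         assert (0 <= A * sE) by nra.
         replace (sE * (A * / exp (Yt t)) - A * (sE * / (P0 + sE * t))) with ((A * sE) * (/ exp (Yt t) - / (P0 + sE * t))) by ring.
         apply Rmult_le_pos; lra. }
     unfold G in HG. rewrite Rmult_0_r, Rplus_0_r, Rmult_1_r in HG.
     set (T := ln (P0 + sE) - ln P0).
     assert (HT0 : 0 <= T) by (unfold T; assert (ln P0 <= ln (P0 + sE)) by (apply ln_le; lra); lra).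
     assert (HAT : A * T <= sE * (sg 1 - sg 0)) by (unfold T; lra).
     assert (HAT2 : A * T * (A * T) <= E * (A * Zb)).
     { rewrite <- HsE. assert (0 <= A * T) by nra.
       apply Rle_trans with (sE * (sg 1 - sg 0) * (sE * (sg 1 - sg 0))). nra.
       replace (sE * (sg 1 - sg 0) * (sE * (sg 1 - sg 0))) with (sE * sE * ((sg 1 - sg 0) * (sg 1 - sg 0))) by ring.
       apply Rmult_le_compat_l; nra. }
     assert (HT2 : T * T <= 2 * Zb).
     { assert (A * (T * T) <= E * Zb).
       { apply (Rmult_le_reg_l A); auto. nra. }
       assert (E / 2 * (T * T) <= E * Zb) by (assert (0 <= T * T) by nra; nra).
       nra. }
     assert (HT1 : T <= 1 + 2 * Zb) by nra.
     assert (HlnP : ln (P0 + sE) <= ln P0 + (1 + 2 * Zb)) by (unfold T in HT1; lra).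
     apply exp_le' in HlnP. rewrite exp_plus, !exp_ln in HlnP by lra.
     assert (HP0K : P0 <= exp K) by (unfold P0; apply exp_le'; lra).
     assert (HsEb : sE <= exp (K + 1 + 2 * Zb)).
     { replace (K + 1 + 2 * Zb) with (K + (1 + 2 * Zb)) by ring. rewrite exp_plus.
       pose proof (exp_pos (1 + 2 * Zb)). nra. }
     unfold Eb. rewrite <- HsE. assert (0 <= Zb * exp K * exp K) by (repeat apply Rmult_le_pos; lra). nra.
   - apply Rnot_le_lt in Hm.
     set (Q := fun t => St t * exp (Yt t)).
     assert (HQc : forall x, continuous Q x) by (intros; unfold Q; ctac).
     assert (HQd : forall x, 0 < x < 1 -> is_derive Q x (- mu * exp (Yt x))).
     { intros x Hx. unfold Q. eapply deq. dtac. apply HSd; auto. apply HYd; auto. cbv beta. ring. }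
     assert (HPc : forall x, continuous (fun t => exp (Yt t)) x) by (intros; ctac).
     assert (HPd : forall x, 0 < x < 1 -> is_derive (fun t => exp (Yt t)) x (Q x)).
     { intros x Hx. unfold Q. eapply deq. dtac. apply HYd; auto. cbv beta. ring. }
     assert (HPK : forall x, in01 x -> exp (Yt x) <= exp K).
     { intros x Hx. destruct (Rle_dec (exp (Yt x)) (exp K)) as [h|h]; auto. exfalso. apply Rnot_le_lt in h.
       assert (e0 : exp (Yt 0) <= exp K) by (apply exp_le'; lra).
       assert (e1 : exp (Yt 1) <= exp K) by (apply exp_le'; lra).
       assert (x <> 0) by (intro; subst; lra). assert (x <> 1) by (intro; subst; lra).
       unfold in01 in Hx.
       destruct (mvt01 (fun t => exp (Yt t)) Q 0 x) as [q1 [Hq1 Hq1e]]; try lra; auto.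
       destruct (mvt01 (fun t => exp (Yt t)) Q x 1) as [q2 [Hq2 Hq2e]]; try lra; auto.
       assert (0 < Q q1) by (destruct (Rlt_dec 0 (Q q1)); auto; nra).
       assert (Q q2 < 0) by (destruct (Rlt_dec (Q q2) 0); auto; nra).
       assert (Q q1 <= Q q2).
       { apply (mono Q (fun t => - mu * exp (Yt t))); auto; try lra.
         intros t Ht. pose proof (exp_pos (Yt t)). nra. }
       lra. }
     set (iK := / exp K).
     assert (HiK : 0 < iK) by (apply Rinv_0_lt_compat; auto).
     assert (HiKe : iK * exp K = 1) by (unfold iK; field; lra).
     assert (HF : (fun t => sg t - A * iK * t) 0 <= (fun t => sg t - A * iK * t) 1).
     { apply (mono (fun t => sg t - A * iK * t) (fun t => sg' t - A * iK)); try lra.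
       - intros t Ht. ctac.
       - intros t Ht. eapply deq. dtac. apply Hsgd; auto. cbv beta. ring.
       - intros t Ht. rewrite Hsgv by auto.
         assert (iK <= / exp (Yt t)) by (apply Rinv_le_contravar; [apply exp_pos | apply HPK; auto]).
         assert (0 <= A * (/ exp (Yt t) - iK)) by (apply Rmult_le_pos; lra). lra. }
     cbv beta in HF.
     assert (HAi : A * iK <= sg 1 - sg 0) by lra.
     assert (A * iK * (A * iK) <= A * Zb) by (assert (0 <= A * iK) by nra; nra).
     assert (A * iK * iK <= Zb) by (apply (Rmult_le_reg_l A); auto; nra).
     assert (HAb : A <= Zb * exp K * exp K).
     { replace A with (A * iK * iK * exp K * exp K) by (replace (A * iK * iK * exp K * exp K) with (A * (iK * exp K) * (iK * exp K)) by ring; rewrite HiKe; ring).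
       apply Rmult_le_compat_r; [lra|]. apply Rmult_le_compat_r; lra. }
     unfold Eb. pose proof (exp_pos (K + 1 + 2 * Zb)). nra. }
 assert (HMu0 : 0 <= Mu) by (unfold Mu; nra).
 assert (HSE : forall z, in01 z -> St z * St z + mu = E * / exp (Yt z) * / exp (Yt z)).
 { intros z Hz. rewrite <- (HEnx z Hz). field. apply Rgt_not_eq, exp_pos. }
 assert (HS01 : forall z, in01 z -> - K <= Yt z <= K -> St z * St z <= Eb * exp K * exp K + K * K).
 { intros z Hz Hyz. pose proof (HSE z Hz) as HSz. rewrite <- exp_Ropp in HSz.
   set (ie := exp (- Yt z)) in *.
   assert (Hie0: 0 < ie) by apply exp_pos. assert (HieK : ie <= exp K) by (apply exp_le'; lra).
   assert (E * ie * ie <= Eb * exp K * exp K).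
   { apply Rle_trans with (E * exp K * exp K).
     - assert (0 <= E * ie) by nra. assert (E*ie*ie <= E*ie*exp K) by (apply Rmult_le_compat_l; lra).
       assert (E*ie <= E*exp K) by (apply Rmult_le_compat_l; lra).
       assert (E*ie*exp K <= E * exp K * exp K) by (apply Rmult_le_compat_r; lra). lra.
     - apply Rmult_le_compat_r; [lra|]. apply Rmult_le_compat_r; lra. }
   lra. }
 assert (HSmono : forall u v, 0 <= u -> u <= v -> v <= 1 -> - St u <= - St v).
 { intros u v Hu Huv Hv. apply (mono (fun t => - St t) (fun t => St t * St t + mu)); auto.
   - intros t Ht; ctac.
   - intros t Ht; eapply deq. dtac. apply HSd; auto. cbv beta; ring. }
 assert (HSb : forall x, in01 x -> St x * St x <= Sb2).
 { intros x Hx. unfold in01 in Hx.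
   assert (h1 : - St 0 <= - St x) by (apply HSmono; lra).
   assert (h2 : - St x <= - St 1) by (apply HSmono; lra).
   pose proof (HS01 0 H0 HY0b). pose proof (HS01 1 H1 HY1b). unfold Sb2.
   pose proof (Rle_0_sqr (St 0)). pose proof (Rle_0_sqr (St 1)). unfold Rsqr in *. destruct (Rle_dec 0 (St x)).
   - assert (St x * St x <= St 0 * St 0) by nra. lra.
   - assert (St x * St x <= St 1 * St 1) by nra. lra. }
 assert (HDi : 0 < / D <= 1).
 { split. apply Rinv_0_lt_compat; lra. rewrite <- Rinv_1; apply Rinv_le_contravar; lra. }
 assert (Hub : forall i x, (i < n)%nat -> in01 x -> Rabs (ut i x) <= 1 + Ub2).
 { intros i x Hi Hx.
   pose proof (Hvx i x Hi Hx) as Hv. set (ie := / exp (Yt x)) in *.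
   assert (Hai : a i * a i <= A).
   { apply Rle_trans with (INR (dd i) * (a i * a i)).
     - specialize (Hd1 i Hi). assert (0 <= a i * a i) by apply Rle_0_sqr. nra.
     - apply (rsum_term n (fun i => INR (dd i) * (a i * a i))); auto.
       intros k Hk. specialize (Hd1 k Hk). apply Rmult_le_pos; [lra| apply Rle_0_sqr]. }
   assert (Hie : 0 < ie) by (apply Rinv_0_lt_compat, exp_pos).
   assert (HvA : (a i * ie) * (a i * ie) <= A * ie * ie).
   { replace ((a i * ie) * (a i * ie)) with ((a i * a i) * (ie * ie)) by ring.
     replace (A * ie * ie) with (A * (ie * ie)) by ring. apply Rmult_le_compat_r; [nra|auto]. }
   assert (HAS : A * ie * ie <= St x * St x + mu).
   { rewrite HAE. pose proof (HSE x Hx) as HSx. fold ie in HSx.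
     assert (HDD : (D - 1) / D <= 1) by (apply (Rmult_le_reg_r D); [lra|]; field_simplify; lra).
     assert (HDD0 : 0 <= (D - 1) / D) by (apply Rmult_le_pos; lra).
     replace ((D - 1) / D * E * ie * ie) with ((D - 1) / D * (E * ie * ie)) by ring.
     rewrite <- HSx. pose proof (Hpos x Hx). nra. }
   pose proof (HSb x Hx). pose proof (Rle_abs mu).
   assert (Hv2 : (ut i x - St x * / D) * (ut i x - St x * / D) <= Sb2 + Mu) by (rewrite Hv; lra).
   assert (Hs2 : (St x * / D) * (St x * / D) <= Sb2).
   { replace ((St x * / D) * (St x * / D)) with ((St x * St x) * (/ D * / D)) by ring.
     assert (/ D * / D <= 1) by nra. assert (0 <= St x * St x) by apply Rle_0_sqr. nra. }
   assert (Hu2 : ut i x * ut i x <= Ub2).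
   { unfold Ub2. set (v := ut i x - St x * / D) in *. set (w := St x * / D) in *.
     replace (ut i x) with (v + w) by (unfold v, w; ring). nra. }
   split_Rabs; nra. }
 assert (Hyb2 : forall i x, (i < n)%nat -> in01 x -> Rabs (yt i x) <= K + (1 + Ub2)).
 { intros i x Hi Hx.
   assert (Hy0 : Rabs (yt i 0) <= K).
   { rewrite Hytv by auto. rewrite (proj1 (Hbc i Hi)). eapply Rle_trans. apply Hp3abs.
     apply Rle_trans with (INR (dd i) * (Rabs (c0 i) + Rabs (c1 i))).
     - specialize (Hd1 i Hi). pose proof (Rabs_pos (c0 i)). pose proof (Rabs_pos (c1 i)). nra.
     - apply (rsum_term n (fun k => INR (dd k) * (Rabs (c0 k) + Rabs (c1 k)))); auto.
       intros k Hk. specialize (Hd1 k Hk). pose proof (Rabs_pos (c0 k)). pose proof (Rabs_pos (c1 k)). nra. }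
   destruct (Req_dec x 0) as [->|Hx0]. { lra. }
   unfold in01 in Hx.
   destruct (mvt01 (yt i) (ut i) 0 x) as [q [Hq Hqe]]; try lra.
   { intros; apply Hyc; auto. }
   { intros; apply Hyd; auto. }
   assert (Hq01 : in01 q) by (unfold in01; lra).
   pose proof (Hub i q Hi Hq01).
   replace (yt i x) with (yt i 0 + ut i q * (x - 0)) by lra.
   eapply Rle_trans. apply Rabs_triang. rewrite Rabs_mult.
   rewrite (Rabs_right (x - 0)) by lra. pose proof (Rabs_pos (ut i q)). nra. }
 split.
 - pose proof (Rabs_pos lam). lra.
 - intros i x Hi Hx. rewrite <- (Hytv i x Hx), <- (Hutv i x Hx). split.
   + pose proof (Hyb2 i x Hi Hx). lra.
   + pose proof (Hub i x Hi Hx). lra.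
Qed.

Lemma comb_bound a b u v e : Rabs u < e -> Rabs v < e -> 0 < e ->
  Rabs (a * u + b * v) < (Rabs a + Rabs b + 1) * e.
Proof. intros Hu Hv He. eapply Rle_lt_trans. apply Rabs_triang. rewrite !Rabs_mult.
 pose proof (Rabs_pos a). pose proof (Rabs_pos b). nra. Qed.

Lemma deriv01_comb f g f2 g2 a b : deriv01 f g -> deriv01 f2 g2 ->
  deriv01 (fun x => a * f x + b * f2 x) (fun x => a * g x + b * g2 x).
Proof. intros H1 H2 x Hx eps He.
 set (c := Rabs a + Rabs b + 1). assert (Hc : 0 < c) by (unfold c; pose proof (Rabs_pos a); pose proof (Rabs_pos b); lra).
 assert (He' : eps / c > 0) by (apply Rdiv_lt_0_compat; lra).
 destruct (H1 x Hx _ He') as [d1 [Hd1 Q1]]. destruct (H2 x Hx _ He') as [d2 [Hd2 Q2]].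
 exists (Rmin d1 d2). split. apply Rmin_pos; lra.
 intros h Hh Hlt Hin.
 assert (A1 := Q1 h Hh (Rlt_le_trans _ _ _ Hlt (Rmin_l _ _)) Hin).
 assert (A2 := Q2 h Hh (Rlt_le_trans _ _ _ Hlt (Rmin_r _ _)) Hin).
 replace ((a * f (x + h) + b * f2 (x + h) - (a * f x + b * f2 x)) / h - (a * g x + b * g2 x))
   with (a * ((f (x + h) - f x) / h - g x) + b * ((f2 (x + h) - f2 x) / h - g2 x)) by (field; auto).
 eapply Rlt_le_trans. apply comb_bound; eauto. fold c. right; field; lra. Qed.

Lemma cont01_comb f f2 a b : cont01 f -> cont01 f2 -> cont01 (fun x => a * f x + b * f2 x).
Proof. intros H1 H2 x Hx eps He.
 set (c := Rabs a + Rabs b + 1). assert (Hc : 0 < c) by (unfold c; pose proof (Rabs_pos a); pose proof (Rabs_pos b); lra).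
 assert (He' : eps / c > 0) by (apply Rdiv_lt_0_compat; lra).
 destruct (H1 x Hx _ He') as [d1 [Hd1 Q1]]. destruct (H2 x Hx _ He') as [d2 [Hd2 Q2]].
 exists (Rmin d1 d2). split. apply Rmin_pos; lra.
 intros z Hz Hlt.
 assert (A1 := Q1 z Hz (Rlt_le_trans _ _ _ Hlt (Rmin_l _ _))).
 assert (A2 := Q2 z Hz (Rlt_le_trans _ _ _ Hlt (Rmin_r _ _))).
 replace (a * f z + b * f2 z - (a * f x + b * f2 x)) with (a * (f z - f x) + b * (f2 z - f2 x)) by ring.
 eapply Rlt_le_trans. apply comb_bound; eauto. fold c. right; field; lra. Qed.

Lemma conv_bound t u v B d1 d2 : 0 <= t <= 1 -> Rabs u <= B - d1 -> Rabs v <= B - d2 ->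
  Rabs (t * u + (1 - t) * v) <= B - Rmin d1 d2.
Proof. intros Ht Hu Hv. eapply Rle_trans. apply Rabs_triang. rewrite !Rabs_mult.
 rewrite (Rabs_right t), (Rabs_right (1 - t)) by lra.
 pose proof (Rmin_l d1 d2). pose proof (Rmin_r d1 d2).
 apply Rle_trans with (t * (B - d1) + (1 - t) * (B - d2)).
 - apply Rplus_le_compat; apply Rmult_le_compat_l; lra.
 - nra. Qed.

Theorem lemma4p3 (n : nat) (dd : nat -> nat) (c0 c1 : nat -> R) :
  (forall i, (i < n)%nat -> (0 < dd i)%nat) ->
  (2 <= rsum n (fun i => INR (dd i))) ->
  exists Om : R -> (nat -> R -> R) -> (nat -> R -> R) -> Prop,
    subset_space n Om /\ bounded_space n Om /\ convex_space Om /\ open_space n Om /\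
    forall (lam p3 : R) (y y' y'' : nat -> R -> R),
      0 <= p3 <= 1 ->
      (forall i, (i < n)%nat ->
         deriv01 (y i) (y' i) /\ deriv01 (y' i) (y'' i) /\ cont01 (y'' i)) ->
      rsum n (fun i => INR (dd i) *
          (- y' i 0 * rsum n (fun k => INR (dd k) * y' k 0) + (y' i 0) ^ 2))
        = (rsum n (fun i => INR (dd i)) - 1) * lam ->
      (forall i x, (i < n)%nat -> in01 x ->
         - y' i x * rsum n (fun k => INR (dd k) * y' k x) - y'' i x = lam) ->
      (forall i, (i < n)%nat -> y i 0 = p3 * c0 i /\ y i 1 = p3 * c1 i) ->
      Om lam y y'.
Proof.
 intros Hdd HD2. destruct (apriori n dd c0 c1 Hdd HD2) as [M HM].
 set (B := M + 1).
 exists (fun lam y y' => inC1 n y y' /\ exists del, del > 0 /\ Rabs lam <= B - del /\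
   forall i x, (i < n)%nat -> in01 x -> Rabs (y i x) <= B - del /\ Rabs (y' i x) <= B - del).
 split; [|split; [|split; [|split]]].
 - intros lam y y' [H _]; auto.
 - exists B. intros lam y y' [_ [del [Hd [Hl Hy]]]]. split; [lra|].
   intros i x Hi Hx. destruct (Hy i x Hi Hx). lra.
 - intros l1 y1 y1' l2 y2 y2' t [C1 [d1 [Hd1 [Hl1 Hy1]]]] [C2 [d2 [Hd2 [Hl2 Hy2]]]] Ht.
   split.
   + intros i Hi. destruct (C1 i Hi) as [D1 E1]. destruct (C2 i Hi) as [D2 E2]. split.
     * apply deriv01_comb; auto.
     * apply cont01_comb; auto.
   + exists (Rmin d1 d2). split. apply Rmin_pos; lra. split.
     * apply conv_bound; auto.
     * intros i x Hi Hx. destruct (Hy1 i x Hi Hx). destruct (Hy2 i x Hi Hx). split; apply conv_bound; auto.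
 - intros lam y y' [C [del [Hd [Hl Hy]]]]. exists (del / 2). split. lra.
   intros mu z z' Cz Hmu Hz. split; auto. exists (del / 2). split. lra. split.
   + replace mu with ((mu - lam) + lam) by ring. eapply Rle_trans. apply Rabs_triang. lra.
   + intros i x Hi Hx. destruct (Hz i x Hi Hx) as [Z1 Z2]. destruct (Hy i x Hi Hx) as [Y1 Y2]. split.
     * replace (z i x) with ((z i x - y i x) + y i x) by ring. eapply Rle_trans. apply Rabs_triang. lra.
     * replace (z' i x) with ((z' i x - y' i x) + y' i x) by ring. eapply Rle_trans. apply Rabs_triang. lra.
 - intros lam p3 y y' y'' Hp3 Hreg Hbd Hode Hbc.
   destruct (HM lam p3 y y' y'' Hp3 Hreg Hbd Hode Hbc) as [Hl Hy].
   split.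
   + intros i Hi. destruct (Hreg i Hi) as [A1 [A2 _]]. split; auto. apply (deriv01_cont _ (y'' i)); auto.
   + exists 1. split. lra. split. unfold B; lra.
     intros i x Hi Hx. destruct (Hy i x Hi Hx). unfold B; lra.
Qed.
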